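(* For any non-null loop $l$ in $\mathbb{Z}^d$, $\mathrm{area}(l)$ is at most the minimum number of deformation steps in a vanishing trajectory starting from $l$; that is, every vanishing trajectory starting at $l$ contains at least $\mathrm{area}(l)$ deformation steps.
   Context: Lattice, paths and loops. $E$ is the set of directed nearest-neighbour edges of $\mathbb{Z}^d$ ($d\ge2$); $e$ goes from $u(e)$ to $v(e)$, $e^{-1}$ is the reversed edge; $e$ is positively oriented if $v(e)$ is lexicographically larger than $u(e)$, and $E^+$ is the set of such edges. Paths, closed paths (the null path included), cycles (classes of closed paths under cyclic rotation); each cycle has a first edge fixed by an arbitrary rule and ''location $k$'' is its $k$-th edge. A closed path $e_1\cdots e_n$ has a backtrack at $i\le n-1$ if $e_{i+1}=e_i^{-1}$ and at $n$ if $e_1=e_n^{-1}$; successively erasing backtracks (removing both edges) until none remain gives a well-defined cycle $[\cdot]$. A loop is a cycle without backtracks (including the null loop). A plaquette is a nonbacktracking closed path of length 4; $\mathcal{P}^+$ is the set of plaquettes $e_1e_2e_3e_4$ with $u(e_1)$ lexicographically smallest and $v(e_1)$ second smallest among its vertices. Loop sequences: finite sequences of loops modulo inserting/deleting null loops, with minimal representations without null loops. Operations and trajectories. For non-null loops $l,l'$ and locations $x,y$: same edge $e$: $l=aeb$, $l'=ced$, $l\oplus_{x,y}l'=[aedceb]$, $l\ominus_{x,y}l'=[ac^{-1}d^{-1}b]$; $e$ vs $e^{-1}$: $l=aeb$, $l'=ce^{-1}d$, $l\oplus_{x,y}l'=[aec^{-1}d^{-1}eb]$, $l\ominus_{x,y}l'=[adcb]$.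 Deformations of $l$: $l\oplus_{x,y}p$, $l\ominus_{x,y}p$ for plaquettes $p$ containing the edge at location $x$ of $l$ or its inverse. Splittings at distinct locations $x,y$: $l=aebec$ (displayed $e$'s at $x,y$ respectively) gives $([aec],[be])$; $l=aebe^{-1}c$ gives $([ac],[b])$. A deformation (splitting) of a loop sequence replaces one component by a deformation (by the two loops of a splitting) of it. A trajectory is a sequence of loop sequences each obtained from the previous by a deformation or a splitting; a vanishing trajectory is finite and ends at the null loop sequence. Area. $1$-chains are elements of the free $\mathbb{Z}$-module over $E^+$, lattice surfaces elements of the free $\mathbb{Z}$-module over $\mathcal{P}^+$. Each $p\in\mathcal{P}^+$ is uniquely $e_1e_2e_3^{-1}e_4^{-1}$ with $e_i\in E^+$, and $\delta(p)=e_1+e_2-e_3-e_4$ extended linearly. For $e\in E$, $r(e)=e$ if $e\in E^+$ and $r(e)=-e^{-1}$ otherwise; $r(l)=\sum_i r(e_i)$ for $l=e_1\cdots e_n$. $\mathrm{area}(\sum n_pp)=\sum|n_p|$ and $\mathrm{area}(l)$ is the minimal area of a lattice surface $x$ with $\delta(x)=r(l)$. *)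

(* Defs.v *)
From Stdlib Require Import ClassicalEpsilon.
From mathcomp Require Import all_boot all_order all_algebra.
Set Implicit Arguments. Unset Strict Implicit. Unset Printing Implicit Defensive.
Import Order.TTheory GRing.Theory Num.Theory.

Notation vertex d := {ffun 'I_d -> int}.
(* A directed nearest-neighbour edge (u, i, s) goes from u to u + (+/-1) e_i,
   with sign + iff s = true.  This is in bijection with E. *)
Notation edge d := (vertex d * 'I_d * bool)%type.

Section Lattice.
Variable d : nat.

Definition esrc (e : edge d) : vertex d := e.1.1.
Definition edir (e : edge d) : 'I_d := e.1.2.
Definition esgn (e : edge d) : bool := e.2.
Definition etgt (e : edge d) : vertex d :=
  [ffun j => (esrc e j + (if j == edir e then (if esgn e then 1 else -1) else 0))%R].
Definition einv (e : edge d) : edge d := (etgt e, edir e, ~~ esgn e).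

Definition lex_lt (u w : vertex d) : bool :=
  [exists i : 'I_d, [forall j : 'I_d, (j < i)%N ==> (u j == w j)] && (u i < w i)%R].

Definition positive (e : edge d) : bool := lex_lt (esrc e) (etgt e).

Definition adj (e f : edge d) : bool := etgt e == esrc f.
Definition closed_path (p : seq (edge d)) : bool := cycle adj p.
Definition no_backtrack (p : seq (edge d)) : bool := cycle (fun e f => f != einv e) p.
(* a loop (given by a representative closed path of its cycle) *)
Definition is_loop (p : seq (edge d)) : bool := closed_path p && no_backtrack p.

Definition pinv (p : seq (edge d)) : seq (edge d) := rev (map einv p).

(* erasing one backtrack (at i <= n-1, or at n) *)
Definition erase_step (c c' : seq (edge d)) : Prop :=
  (exists a b e, c = a ++ e :: einv e :: b /\ c' = a ++ b) \/
  (exists e m, c = e :: rcons m (einv e) /\ c' = m).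

Inductive erases : seq (edge d) -> seq (edge d) -> Prop :=
| erases_refl c : erases c c
| erases_step c c' c'' : erase_step c c' -> erases c' c'' -> erases c c''.

Definition red (c m : seq (edge d)) : Prop :=
  exists m0, erases c m0 /\ no_backtrack m0 /\ exists k, m = rot k m0.

(* l (+)_{x,y} l' ; the locations x,y are those of the displayed e's *)
Definition oplus_res (l l' m : seq (edge d)) : Prop :=
  exists a b c dd e, l = a ++ e :: b /\
   ((l' = c ++ e :: dd /\ red (a ++ e :: dd ++ c ++ e :: b) m) \/
    (l' = c ++ einv e :: dd /\ red (a ++ e :: pinv c ++ pinv dd ++ e :: b) m)).

Definition ominus_res (l l' m : seq (edge d)) : Prop :=
  exists a b c dd e, l = a ++ e :: b /\
   ((l' = c ++ e :: dd /\ red (a ++ pinv c ++ pinv dd ++ b) m) \/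
    (l' = c ++ einv e :: dd /\ red (a ++ dd ++ c ++ b) m)).

Definition is_plaquette (p : seq (edge d)) : bool :=
  (size p == 4) && closed_path p && no_backtrack p.

Definition deform (l m : seq (edge d)) : Prop :=
  exists p, is_plaquette p /\ (oplus_res l p m \/ ominus_res l p m).

Definition splitting (l m1 m2 : seq (edge d)) : Prop :=
  exists a b c e,
   (l = a ++ e :: b ++ e :: c /\ red (a ++ e :: c) m1 /\ red (b ++ [:: e]) m2) \/
   (l = a ++ e :: b ++ einv e :: c /\ red (a ++ c) m1 /\ red b m2).

(* loop sequences in minimal representation (no null loops) *)
Definition nn (m : seq (edge d)) : seq (seq (edge d)) :=
  if m is [::] then [::] else [:: m].

Definition lseq_deform (s t : seq (seq (edge d))) : Prop :=
  exists s1 s2 l m, s = s1 ++ l :: s2 /\ deform l m /\ t = s1 ++ nn m ++ s2.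

Definition lseq_split (s t : seq (seq (edge d))) : Prop :=
  exists s1 s2 l m1 m2, s = s1 ++ l :: s2 /\ splitting l m1 m2 /\
    t = s1 ++ nn m1 ++ nn m2 ++ s2.

(* a trajectory from s: labelled steps (true = deformation, false = splitting) *)
Fixpoint trajectory (s : seq (seq (edge d))) (steps : seq (bool * seq (seq (edge d)))) : Prop :=
  match steps with
  | [::] => True
  | (b, t) :: rest => (if b then lseq_deform s t else lseq_split s t) /\ trajectory t rest
  end.

Definition vanishing (s : seq (seq (edge d))) (steps : seq (bool * seq (seq (edge d)))) : Prop :=
  trajectory s steps /\ last s (map snd steps) = [::].

Definition num_deformations (steps : seq (bool * seq (seq (edge d)))) : nat :=
  count (fun st => st.1) steps.

Definition in_Pplus (p : seq (edge d)) : Prop :=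
  is_plaquette p /\
  exists e1 e2 e3 e4, p = [:: e1; e2; e3; e4] /\
   let V := [:: esrc e1; esrc e2; esrc e3; esrc e4] in
   (forall w, w \in V -> w != esrc e1 -> lex_lt (esrc e1) w) /\
   (forall w, w \in V -> w != esrc e1 -> w != etgt e1 -> lex_lt (etgt e1) w).

(* 1-chains, as coefficient functions on edges (supported on E^+) *)
Definition ind (e : edge d) : edge d -> int := fun f => Posz (f == e).

Definition r_edge (e : edge d) : edge d -> int :=
  fun f => if positive e then ind e f else (- ind (einv e) f)%R.
Definition r_path (l : seq (edge d)) : edge d -> int :=
  fun f => (\sum_(e <- l) r_edge e f)%R.

(* delta(p) for p = e1 e2 e3^{-1} e4^{-1} in P^+, i.e. p = [f1;f2;f3;f4]
   with e1 = f1, e2 = f2, e3 = f3^{-1}, e4 = f4^{-1} *)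
Definition delta_plaq (p : seq (edge d)) : edge d -> int :=
  fun f => match p with
           | [:: f1; f2; f3; f4] =>
               (ind f1 f + ind f2 f - ind (einv f3) f - ind (einv f4) f)%R
           | _ => 0%R
           end.

(* lattice surfaces: finite formal Z-combinations of plaquettes in P^+,
   written as a list of (plaquette, coefficient) with distinct plaquettes *)
Definition surface_wf (x : seq (seq (edge d) * int)) : Prop :=
  uniq (map fst x) /\ forall pn, pn \in x -> in_Pplus pn.1.

Definition delta (x : seq (seq (edge d) * int)) : edge d -> int :=
  fun f => (\sum_(pn <- x) pn.2 * delta_plaq pn.1 f)%R.

Definition surf_area (x : seq (seq (edge d) * int)) : nat :=
  \sum_(pn <- x) `|pn.2|%N.

Definition has_surface_of_area (l : seq (edge d)) (n : nat) : Prop :=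
  exists x, surface_wf x /\ (forall f, delta x f = r_path l f) /\ surf_area x = n.

Definition area_pred (l : seq (edge d)) : pred nat :=
  fun n => if excluded_middle_informative (has_surface_of_area l n) then true else false.

(* area(l) = minimal area of a lattice surface x with delta(x) = r(l)
   (set to 0 if no such surface exists, which does not happen for loops) *)
Definition loop_area (l : seq (edge d)) : nat :=
  match excluded_middle_informative (exists n, area_pred l n) with
  | left H => ex_minn H
  | right _ => 0
  end.

End Lattice.

(* Main.v *)
Require Import Defs.
From mathcomp Require Import all_boot all_order all_algebra.
From mathcomp Require Import zify ring lra.
From Stdlib Require Import ClassicalEpsilon.
Set Implicit Arguments. Unset Strict Implicit. Unset Printing Implicit Defensive.
Import Order.TTheory GRing.Theory Num.Theory.
Local Open Scope ring_scope.

Definition sg (s : bool) : int := if s then 1 else -1.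
Definition ind' (I : eqType) (k a : I) s : int := if k == a then sg s else 0.


Lemma neqF (I : eqType) (x y : I) : x != y -> (x == y) = false /\ (y == x) = false.
Proof. by move=> h; rewrite (negbTE h) eq_sym (negbTE h). Qed.

Lemma combi (I : eqType) (a1 a2 a3 a4 : I) (s1 s2 s3 s4 : bool) :
 (a2,s2) != (a1,~~s1) -> (a3,s3) != (a2,~~s2) -> (a4,s4) != (a3,~~s3) -> (a1,s1) != (a4,~~s4) ->
 (forall k : I, ind' k a1 s1 + ind' k a2 s2 + ind' k a3 s3 + ind' k a4 s4 = 0) ->
 [/\ a3 = a1, s3 = ~~ s1, a4 = a2, s4 = ~~ s2 & a2 != a1].
Proof.
rewrite !xpair_eqE => N1 N2 N3 N4 H.
have H1 := H a1; have H2 := H a2; rewrite /ind' in H1 H2; clear H; move: N1 N2 N3 N4 H1 H2.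
(case: (eqVneq a2 a1); [move=> -> | move=> /neqF [ha2 ha2']; rewrite ?ha2 ?ha2']);
(case: (eqVneq a3 a1); [move=> -> | move=> /neqF [ha3 ha3']; rewrite ?ha3 ?ha3']);
(case: (eqVneq a4 a1); [move=> -> | move=> /neqF [ha4 ha4']; rewrite ?ha4 ?ha4']); rewrite ?eqxx /=;
case: s1; case: s2; case: s3; case: s4; rewrite /sg /= => //; try lia;
 rewrite ?ha2 ?ha2' /=;
 (case: (eqVneq a2 a4); [move=> ->; rewrite ?eqxx /= => //; lia | move=>/neqF [h h']; rewrite ?h ?h' /= => //; lia]).
Qed.


Section S.
Variable d : nat.
Implicit Types (e f : edge d) (u w : vertex d).

Lemma etgtE e k : etgt e k = esrc e k + (if k == edir e then sg (esgn e) else 0).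
Proof. by rewrite /etgt ffunE. Qed.

Lemma lex_witness u w (k : 'I_d) :
  (forall m : 'I_d, (m < k)%N -> u m = w m) -> u k < w k -> lex_lt u w.
Proof.
move=> H1 H2; apply/existsP; exists k; rewrite H2 andbT.
by apply/forallP=> m; apply/implyP=> /H1 ->.
Qed.

Lemma positiveE e : positive e = esgn e.
Proof.
case: e => [[u k] s]; rewrite /positive /esgn /=.
case: s.
  apply: (@lex_witness _ _ k).
    move=> m hm; rewrite etgtE /=; have -> : (m == k) = false.
      by apply/negbTE; apply/eqP=> E; move: hm; rewrite E ltnn.
    by rewrite addr0.
  by rewrite etgtE /= eqxx /sg; lia.
apply/negbTE/negP=> /existsP [i /andP [/forallP H1 H2]].
move: H2; rewrite etgtE /=.
case: (ltngtP i k) => hik.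
- have -> : (i == k) = false by apply/negbTE; apply/eqP=> E; move: hik; rewrite E ltnn.
  by rewrite addr0 ltxx.
- move: (H1 k); rewrite hik /= etgtE /= eqxx /sg => /eqP; lia.
- have -> : i = k by apply: val_inj.
  by rewrite eqxx /sg; lia.
Qed.

Lemma einvK e : einv (einv e) = e.
Proof.
case: e => [[u k] s]; rewrite /einv /=; rewrite negbK; congr (_, _, _).
apply/ffunP=> j; rewrite !etgtE /=; case: (j == k) => //; last by rewrite !addr0.
by case: s; rewrite /esrc /sg /=; lia.
Qed.

Lemma esgn_einv e : esgn (einv e) = ~~ esgn e.
Proof. by []. Qed.

Lemma r_edge_inv e f : r_edge (einv e) f = - r_edge e f.
Proof.
rewrite /r_edge !positiveE esgn_einv einvK.
by case: (esgn e) => /=; rewrite ?opprK.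
Qed.

Lemma r_path_nil f : r_path [::] f = 0.
Proof. by rewrite /r_path big_nil. Qed.
Lemma r_path_cons e l f : r_path (e :: l) f = r_edge e f + r_path l f.
Proof. by rewrite /r_path big_cons. Qed.
Lemma r_path_cat l1 l2 f : r_path (l1 ++ l2) f = r_path l1 f + r_path l2 f.
Proof. by rewrite /r_path big_cat. Qed.
Lemma r_path_rcons l e f : r_path (rcons l e) f = r_path l f + r_edge e f.
Proof. by rewrite -cats1 r_path_cat r_path_cons r_path_nil addr0. Qed.
Lemma r_path_pinv l f : r_path (pinv l) f = - r_path l f.
Proof.
elim: l => [|e l IH]; first by rewrite /pinv /= r_path_nil oppr0.
by rewrite /pinv /= rev_cons r_path_rcons -/(pinv l) IH r_path_cons r_edge_inv opprD addrC.
Qed.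
Lemma r_path_rot k l f : r_path (rot k l) f = r_path l f.
Proof. by rewrite /r_path; apply: perm_big; rewrite perm_rot perm_refl. Qed.

Lemma r_path_erases c c' f : erases c c' -> r_path c' f = r_path c f.
Proof.
elim=> // {}c {}c' c'' [[a [b [e [-> ->]]]] | [e [m [-> ->]]]] _ IH; rewrite IH.
  by rewrite !(r_path_cat, r_path_cons, r_path_pinv, r_path_nil, r_edge_inv); lra.
by rewrite r_path_cons r_path_rcons r_edge_inv; lra.
Qed.

Lemma r_path_red c m f : red c m -> r_path m f = r_path c f.
Proof. by case=> m0 [H [_ [k ->]]]; rewrite r_path_rot (r_path_erases _ H). Qed.


Lemma r_oplus l p m : oplus_res l p m ->
  (forall f, r_path m f = r_path l f + r_path p f) \/
  (forall f, r_path m f = r_path l f - r_path p f).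
Proof.
case=> a [b [c [dd [e [-> [[-> H]|[-> H]]]]]]]; [left|right] => f; rewrite (r_path_red f H).
  by rewrite !(r_path_cat, r_path_cons, r_path_pinv, r_path_nil, r_edge_inv); lra.
by rewrite !(r_path_cat, r_path_cons, r_path_pinv, r_path_nil, r_edge_inv); lra.
Qed.

Lemma r_ominus l p m : ominus_res l p m ->
  (forall f, r_path m f = r_path l f + r_path p f) \/
  (forall f, r_path m f = r_path l f - r_path p f).
Proof.
case=> a [b [c [dd [e [-> [[-> H]|[-> H]]]]]]]; [right|left] => f; rewrite (r_path_red f H).
  by rewrite !(r_path_cat, r_path_cons, r_path_pinv, r_path_nil, r_edge_inv); lra.
by rewrite !(r_path_cat, r_path_cons, r_path_pinv, r_path_nil, r_edge_inv); lra.
Qed.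

Lemma r_split l m1 m2 f : splitting l m1 m2 -> r_path l f = r_path m1 f + r_path m2 f.
Proof.
case=> a [b [c [e [[-> [H1 H2]]|[-> [H1 H2]]]]]]; rewrite (r_path_red f H1) (r_path_red f H2).
  by rewrite !(r_path_cat, r_path_cons, r_path_pinv, r_path_nil, r_edge_inv); lra.
by rewrite !(r_path_cat, r_path_cons, r_path_pinv, r_path_nil, r_edge_inv); lra.
Qed.

Definition R (s : seq (seq (edge d))) f := \sum_(l <- s) r_path l f.

Lemma R_cat s1 s2 f : R (s1 ++ s2) f = R s1 f + R s2 f.
Proof. by rewrite /R big_cat. Qed.
Lemma R_cons l s f : R (l :: s) f = r_path l f + R s f.
Proof. by rewrite /R big_cons. Qed.
Lemma R_nn m f : R (nn m) f = r_path m f.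
Proof. by case: m => [|e m]; rewrite /R /= ?big_nil ?r_path_nil // big_cons big_nil addr0. Qed.


Definition surf := seq (seq (edge d) * int).
Definition upd q (c : int) (pn : seq (edge d) * int) :=
  if pn.1 == q then (pn.1, pn.2 + c) else pn.
Definition add_plaq (x : surf) q c :=
  if q \in map fst x then map (upd q c) x else (q, c) :: x.

Lemma map_fst_upd (x : surf) q c : map fst (map (upd q c) x) = map fst x.
Proof. by elim: x => //= pn x ->; rewrite /upd; case: eqP. Qed.

Lemma delta_cons pn (x : surf) f : delta (pn :: x) f = pn.2 * delta_plaq pn.1 f + delta x f.
Proof. by rewrite /delta big_cons. Qed.
Lemma area_cons pn (x : surf) : surf_area (pn :: x) = (`|pn.2| + surf_area x)%N.
Proof. by rewrite /surf_area big_cons. Qed.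

Lemma delta_upd (x : surf) q c f : uniq (map fst x) ->
  delta (map (upd q c) x) f = delta x f + (q \in map fst x)%:R * (c * delta_plaq q f).
Proof.
elim: x => [|pn x IH]; first by rewrite /delta !big_nil /= mul0r addr0.
move=> /= /andP [hn hu]; rewrite !delta_cons IH // inE /upd.
case: (eqVneq pn.1 q) => [E|ne] /=.
  rewrite -E (negbTE hn) E /=; lra.
by rewrite addrA.
Qed.

Lemma abszD_le (a b : int) : (`|(a + b)%R| <= `|a| + `|b|)%N.
Proof. lia. Qed.

Lemma area_upd (x : surf) q c : uniq (map fst x) ->
  (surf_area (map (upd q c) x) <= surf_area x + `|c| * (q \in map fst x))%N.
Proof.
elim: x => [|pn x IH]; first by rewrite /surf_area !big_nil.
move=> /= /andP [hn hu]; rewrite !area_cons inE /upd.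
case: (eqVneq pn.1 q) => [E|ne] /=.
  move: (IH hu); rewrite -E (negbTE hn) muln0 addn0 => h.
  rewrite muln1; have := leq_add (abszD_le pn.2 c) h. by rewrite /upd addnAC.
move: (IH hu); rewrite /upd => h.
by rewrite -addnA leq_add2l.
Qed.

Lemma add_plaq_ok (x : surf) q c : surface_wf x -> in_Pplus q -> (c = 1 \/ c = -1) ->
  [/\ surface_wf (add_plaq x q c),
      (forall f, delta (add_plaq x q c) f = delta x f + c * delta_plaq q f) &
      (surf_area (add_plaq x q c) <= (surf_area x).+1)%N].
Proof.
move=> [hu hx] hq hc; have ac : `|c|%N = 1%N by case: hc => ->.
rewrite /add_plaq; case: ifP => hin.
  split.
  - split; first by rewrite map_fst_upd.
    move=> pn /mapP [pn' hpn' ->]; rewrite /upd; case: ifP => //= _; exact: hx.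
  - by move=> f; rewrite delta_upd // hin mul1r.
  - by have := area_upd q c hu; rewrite hin ac muln1 addn1.
split.
- split; first by rewrite /= hin.
  by move=> pn; rewrite inE => /orP [/eqP -> //|]; apply: hx.
- by move=> f; rewrite delta_cons /= addrC.
- by rewrite area_cons ac.
Qed.


Definition sh u k := etgt (u, k, true).
Definition sq w0 (i j : 'I_d) : seq (edge d) :=
  [:: (w0, j, true); (sh w0 j, i, true); (sh (sh w0 j) i, j, false); (sh w0 i, i, false)].

Lemma shE u k m : sh u k m = u m + (if m == k then 1 else 0).
Proof. by rewrite /sh etgtE. Qed.
Lemma etgtE' u k s m : etgt (u, k, s) m = u m + (if m == k then sg s else 0).
Proof. by rewrite etgtE. Qed.

Lemma ltn_neq (m i : 'I_d) : (m < i)%N -> (m == i) = false.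
Proof. by move=> h; apply/negbTE; apply/eqP=> E; move: h; rewrite E ltnn. Qed.

Lemma neq_einv e f : edir f != edir e -> f != einv e.
Proof. by move=> h; apply/eqP=> E; move: h; rewrite E eqxx. Qed.

Section Sq.
Variables (w0 : vertex d) (i j : 'I_d).
Hypothesis hij : (i < j)%N.

Lemma sq_e3 : etgt (sh (sh w0 j) i, j, false) = sh w0 i.
Proof.
have nij : (i == j) = false by apply: ltn_neq.
apply/ffunP=> m; rewrite etgtE' !shE.
have nji : (j == i) = false by rewrite eq_sym.
case: (eqVneq m j) => [->|mj]; first by rewrite nji /sg; lra.
by rewrite !addr0.
Qed.

Lemma sq_e4 : etgt (sh w0 i, i, false) = w0.
Proof. by apply/ffunP=> m; rewrite etgtE' !shE; case: (m == i); rewrite /sg; lra. Qed.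

Lemma sq_plaq : is_plaquette (sq w0 i j).
Proof.
have nij : (i == j) = false by apply: ltn_neq.
have nji : (j == i) = false by rewrite eq_sym.
rewrite /is_plaquette /closed_path /no_backtrack /sq /= /adj /= sq_e3 sq_e4 !eqxx /=.
by rewrite !neq_einv //= ?nij ?nji.
Qed.

Lemma sq_Pplus : in_Pplus (sq w0 i j).
Proof.
split; first exact: sq_plaq.
have nij : (i == j) = false by apply: ltn_neq.
have nji : (j == i) = false by rewrite eq_sym.
have hm : forall m : 'I_d, (m < i)%N -> (m == i) = false /\ (m == j) = false.
  by move=> m h; split; apply: ltn_neq => //; apply: ltn_trans hij.
do 4 eexists; split; first reflexivity.
rewrite /esrc /etgt /= -/(sh w0 j).
split.
  move=> w; rewrite !inE => /or4P [/eqP->|/eqP->|/eqP->|/eqP->]; rewrite ?eqxx // => _.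
  - apply: (@lex_witness _ _ j); first by move=> m /ltn_neq h; rewrite shE h addr0.
    by rewrite shE eqxx; lra.
  - apply: (@lex_witness _ _ i); first by move=> m /hm [h1 h2]; rewrite !shE ?h1 ?h2 ?addr0.
    by rewrite !shE eqxx nij; lra.
  - apply: (@lex_witness _ _ i); first by move=> m /hm [h1 h2]; rewrite !shE ?h1 ?h2 ?addr0.
    by rewrite !shE eqxx; lra.
move=> w; rewrite !inE => /or4P [/eqP->|/eqP->|/eqP->|/eqP->]; rewrite ?eqxx // => _ _.
- apply: (@lex_witness _ _ i); first by move=> m /hm [h1 h2]; rewrite !shE ?h1 ?h2 ?addr0.
  by rewrite !shE eqxx nij; lra.
- apply: (@lex_witness _ _ i); first by move=> m /hm [h1 h2]; rewrite !shE ?h1 ?h2 ?addr0.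
  by rewrite !shE eqxx nij; lra.
Qed.

Lemma sq_delta f : r_path (sq w0 i j) f = delta_plaq (sq w0 i j) f.
Proof.
rewrite /sq /delta_plaq !r_path_cons r_path_nil /r_edge !positiveE /=.
lra.
Qed.

End Sq.


Lemma plaq_struct (p : seq (edge d)) : is_plaquette p -> exists v a b s t, a != b /\
  p = [:: (v, a, s); (etgt (v, a, s), b, t); (etgt (etgt (v, a, s), b, t), a, ~~ s);
          (etgt (etgt (etgt (v, a, s), b, t), a, ~~ s), b, ~~ t)].
Proof.
case: p => [|[[u1 a1] s1] [|[[u2 a2] s2] [|[[u3 a3] s3] [|[[u4 a4] s4] [|]]]]] //.
rewrite /is_plaquette /closed_path /no_backtrack /= /adj /esrc /=.
case/and5P=> /and5P [/eqP E2 /eqP E3 /eqP E4 /eqP E1 _] N1 N2 N3 /andP [N4 _].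
subst u2 u3 u4.
move: N1 N2 N3 N4; rewrite /einv /edir /= E1 !xpair_eqE !eqxx /= => N1 N2 N3 N4.
have H : forall k, ind' k a1 s1 + ind' k a2 s2 + ind' k a3 s3 + ind' k a4 s4 = 0.
  move=> k; have := congr1 (fun v : vertex d => v k) E1 => /=.
  rewrite !etgtE' /ind' => h; apply/(addrI (u1 k)); by rewrite addr0 !addrA.
have [] := @combi _ a1 a2 a3 a4 s1 s2 s3 s4.
- by rewrite xpair_eqE.
- by rewrite xpair_eqE.
- by rewrite xpair_eqE.
- by rewrite xpair_eqE.
- exact: H.
move=> -> -> -> -> n21.
by exists u1, a1, a2, s1, s2; split; first by rewrite eq_sym.
Qed.


Definition V (v : vertex d) (a b : 'I_d) (x y : int) : vertex d :=
  [ffun k => v k + (if k == a then x else 0) + (if k == b then y else 0)].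

Lemma etgtVa v a b x y s : etgt (V v a b x y, a, s) = V v a b (x + sg s) y.
Proof.
apply/ffunP=> k; rewrite etgtE' !ffunE.
case: (k == a); case: (k == b); lra.
Qed.
Lemma etgtVb v a b x y s : etgt (V v a b x y, b, s) = V v a b x (y + sg s).
Proof.
apply/ffunP=> k; rewrite etgtE' !ffunE.
case: (k == a); case: (k == b); lra.
Qed.
Lemma V00 v a b : V v a b 0 0 = v.
Proof. by apply/ffunP=> k; rewrite !ffunE; case: (k == a); case: (k == b); rewrite !addr0. Qed.
Lemma Vcongr v a b x y x' y' : x = x' -> y = y' -> V v a b x y = V v a b x' y'.
Proof. by move=> -> ->. Qed.

Ltac lst := repeat match goal with
 | |- (_ :: _) = (_ :: _) => congr (_ :: _)
 | |- (_, _, _) = (_, _, _) => congr (_, _, _)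
 end.
Ltac fin := solve [ rewrite /sq /sh /pinv /einv /rot /=; try rewrite /rev /=; rewrite ?(etgtVa, etgtVb) /sg /=; lst;
   first [reflexivity | apply: Vcongr; lia] ].
Ltac leaf := first [ left; fin | right; fin ].
Ltac tk hab := first [ exists 0%N; split; [exact hab|leaf] | exists 1%N; split; [exact hab|leaf]
  | exists 2%N; split; [exact hab|leaf] | exists 3%N; split; [exact hab|leaf] ].
Ltac tij a b hab := first [ exists a, b; tk hab | exists b, a; tk hab ].
Ltac tw v a b hab := first [ exists (V v a b 0 0); tij a b hab | exists (V v a b (-1) 0); tij a b hab
  | exists (V v a b 0 (-1)); tij a b hab | exists (V v a b (-1) (-1)); tij a b hab ].

Lemma plaq_sq (p : seq (edge d)) : is_plaquette p ->
  exists w0 (i j : 'I_d) k, (i < j)%N /\ (p = rot k (sq w0 i j) \/ p = rot k (pinv (sq w0 i j))).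
Proof.
move=> /plaq_struct [v [a [b [s [t [nab ->]]]]]].
rewrite -(V00 v a b) !(etgtVa, etgtVb).
case: (ltngtP a b) => hab; last first.
  by move: nab; rewrite (val_inj hab) eqxx.
- case: s; case: t; tw v a b hab.
- case: s; case: t; tw v a b hab.
Qed.


Lemma plaq_r (p : seq (edge d)) : is_plaquette p -> exists q (c : int),
  [/\ in_Pplus q, (c = 1 \/ c = -1) & forall f, r_path p f = c * delta_plaq q f].
Proof.
move=> /plaq_sq [w0 [i [j [k [hij [->|->]]]]]]; exists (sq w0 i j).
  exists 1; split; [exact: sq_Pplus | by left | move=> f].
  by rewrite r_path_rot sq_delta // mul1r.
exists (-1); split; [exact: sq_Pplus | by right | move=> f].
by rewrite r_path_rot r_path_pinv sq_delta // mulN1r.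
Qed.

Lemma deform_r (l m : seq (edge d)) : deform l m -> exists q (c : int),
  [/\ in_Pplus q, (c = 1 \/ c = -1) & forall f, r_path m f = r_path l f + c * delta_plaq q f].
Proof.
case=> p [/plaq_r [q [c [hq hc hp]]] H].
have : (forall f, r_path m f = r_path l f + r_path p f) \/
       (forall f, r_path m f = r_path l f - r_path p f).
  by case: H => [/r_oplus|/r_ominus].
case=> h; [exists q, c | exists q, (- c)]; split => //.
- by move=> f; rewrite h hp.
- by case: hc => ->; [right|left]; rewrite ?opprK.
- by move=> f; rewrite h hp mulNr.
Qed.

Lemma traj_inv s steps : trajectory s steps -> last s (map snd steps) = [::] ->
  exists x : surf, [/\ surface_wf x, (forall f, delta x f = R s f) &
     (surf_area x <= num_deformations steps)%N].
Proof.
elim: steps s => [|[b t] rest IH] s /=.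
  move=> _ ->; exists [::]; split.
  - by split.
  - by move=> f; rewrite /delta /R !big_nil.
  - by rewrite /surf_area big_nil.
case=> hst htr hl; have [x [hw hd ha]] := IH t htr hl.
rewrite /num_deformations /=.
case: b hst => /= hst.
  case: hst => [s1 [s2 [l [m [-> [/deform_r [q [c [hq hc hr]]] Et]]]]]].
  rewrite Et in hd.
  have hc' : - c = 1 \/ - c = -1 by case: hc => ->; [right|left]; rewrite ?opprK.
  have [hw' hd' ha'] := add_plaq_ok hw hq hc'.
  exists (add_plaq x q (- c)); split => //.
    move=> f; rewrite hd' hd !R_cat !R_cons R_nn hr; lra.
  apply: leq_trans ha' _; rewrite add1n ltnS; exact: ha.
case: hst => [s1 [s2 [l [m1 [m2 [-> [hs Et]]]]]]].
rewrite Et in hd.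
exists x; split => //.
move=> f; rewrite hd !R_cat !R_cons !R_nn (r_split f hs); lra.
Qed.

End S.

Theorem lemma14p1 (d : nat) (hd : (2 <= d)%N) (l : seq (edge d))
  (hl : is_loop l) (hnn : l != [::])
  (steps : seq (bool * seq (seq (edge d)))) :
  vanishing [:: l] steps -> (loop_area l <= num_deformations steps)%N.
Proof.
case=> htr hlast; have [x [hw hdx ha]] := traj_inv htr hlast.
have hs : has_surface_of_area l (surf_area x).
  exists x; split => //; split => // f; rewrite hdx /R big_cons big_nil addr0 //.
have hp : area_pred l (surf_area x).
  by rewrite /area_pred; case: excluded_middle_informative.
apply: leq_trans ha; rewrite /loop_area.
case: excluded_middle_informative => [H|[]]; last by exists (surf_area x).
by case: ex_minnP => n _ /(_ _ hp).
Qed.
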